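(* For every integer $m\geq 2$ and every integer $n\geq 3$, the graph $mF_n$ (the disjoint union of $m$ copies of the fan $F_n$) is $C_3$-supermagic.
   Context: All graphs are finite and simple. For a graph $H$, a graph $G=(V,E)$ has an $H$-covering if every edge of $G$ belongs to a subgraph of $G$ isomorphic to $H$. For such $G$, an $H$-magic labeling is a bijection $\lambda: V\cup E\to\{1,2,\dots,|V|+|E|\}$ for which there is a constant $c$ such that for every subgraph $H'=(V',E')$ of $G$ isomorphic to $H$, $\sum_{v\in V'}\lambda(v)+\sum_{e\in E'}\lambda(e)=c$. It is $H$-supermagic if moreover $\{\lambda(v):v\in V\}=\{1,\dots,|V|\}$; $G$ is $H$-supermagic if it admits such a labeling. $C_k$ is the cycle of length $k$. $mG$ denotes the disjoint union of $m$ copies of $G$. For $n\geq 3$, the fan $F_n=K_1+P_n$ has vertices $c,v_1,\dots,v_n$ and edges $cv_i$ ($1\le i\le n$) and $v_iv_{i+1}$ ($1\le i\le n-1$). *)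

(* Defs.v *)
From mathcomp Require Import all_boot.
Set Implicit Arguments. Unset Strict Implicit. Unset Printing Implicit Defensive.

(* A simple graph is given by a finite vertex type V and an adjacency
   relation adj : rel V (symmetric and irreflexive in all our uses).
   An edge is a 2-element vertex set {u, v} with adj u v. *)
Definition edge_set (V : finType) (adj : rel V) : {set {set V}} :=
  [set e : {set V} | [exists u, exists v, adj u v && (e == [set u; v])]].

Definition edge (V : finType) (adj : rel V) : finType :=
  {e : {set V} | e \in edge_set adj}.

Definition elt (V : finType) (adj : rel V) : finType := (V + edge adj)%type.

Definition is_H_subgraph (VH : finType) (eH : rel VH) (V : finType) (adj : rel V)
    (V' : {set V}) (E' : {set edge adj}) : Prop :=
  (forall e, e \in E' -> val e \subset V') /\
  exists f : VH -> V,
    [/\ injective f, f @: setT = V' &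
        forall a b, eH a b <-> exists2 e, e \in E' & val e = [set f a; f b]].

Definition H_covering (VH : finType) (eH : rel VH) (V : finType) (adj : rel V) : Prop :=
  forall e : edge adj, exists V' E', is_H_subgraph eH V' E' /\ e \in E'.

Definition is_total_labeling (V : finType) (adj : rel V) (lam : elt adj -> nat) : Prop :=
  [/\ injective lam,
      forall x, 1 <= lam x <= #|V| + #|edge adj| &
      forall k, 1 <= k <= #|V| + #|edge adj| -> exists x, lam x = k].

Definition H_magic_labeling (VH : finType) (eH : rel VH) (V : finType) (adj : rel V)
    (lam : elt adj -> nat) : Prop :=
  is_total_labeling lam /\
  exists c, forall (V' : {set V}) (E' : {set edge adj}), is_H_subgraph eH V' E' ->
    \sum_(v in V') lam (inl v) + \sum_(e in E') lam (inr e) = c.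

Definition H_supermagic_labeling (VH : finType) (eH : rel VH) (V : finType) (adj : rel V)
    (lam : elt adj -> nat) : Prop :=
  H_magic_labeling eH lam /\
  (forall k : nat, (exists v : V, lam (inl v) = k) <-> 1 <= k <= #|V|).

Definition H_supermagic (VH : finType) (eH : rel VH) (V : finType) (adj : rel V) : Prop :=
  H_covering eH adj /\ exists lam : elt adj -> nat, H_supermagic_labeling eH lam.

Definition C3_adj : rel 'I_3 := fun a b => a != b.

(* m F_n: vertex (k, None) is the centre c of copy k, (k, Some i) is v_{i+1}
   of copy k (i < n).  Edges: c v_i and v_i v_{i+1}, within each copy. *)
Definition mfan_vertex (m n : nat) : finType := ('I_m * option 'I_n)%type.

Definition mfan_adj (m n : nat) : rel (mfan_vertex m n) :=
  fun x y => (x.1 == y.1) &&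
    match x.2, y.2 with
    | None, Some _ => true
    | Some _, None => true
    | Some i, Some j => (i.+1 == j :> nat) || (j.+1 == i :> nat)
    | None, None => false
    end.
Arguments mfan_adj : clear implicits.

(* Main.v *)
Require Import Defs.
From mathcomp Require Import all_boot zify.
Set Implicit Arguments. Unset Strict Implicit. Unset Printing Implicit Defensive.

Lemma sum2 (T : finType) (F : T -> nat) (a b : T) : a != b ->
  \sum_(x in [set a; b]) F x = F a + F b.
Proof.
move=> ab; rewrite (big_setD1 a) ?inE ?eqxx //.
have -> : [set a; b] :\ a = [set b].
  apply/setP => x; rewrite !inE; case: (eqVneq x a) => [->|] /=; last by [].

  by rewrite (negPf ab).
by rewrite big_set1.
Qed.

Lemma sum3 (T : finType) (F : T -> nat) (a b c : T) : a != b -> a != c -> b != c ->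
  \sum_(x in [set a; b; c]) F x = F a + F b + F c.
Proof.
move=> ab ac bc; rewrite (big_setD1 c) ?inE ?eqxx ?orbT //.
have -> : [set a; b; c] :\ c = [set a; b].
  apply/setP => x; rewrite !inE; case: (eqVneq x c) => [->|] /=.
    by rewrite !(eq_sym c) (negPf ac) (negPf bc).
  by rewrite orbF.
rewrite sum2 //=; lia.
Qed.

Lemma set2_eq (T : finType) (u v x y : T) : u != v -> [set u; v] = [set x; y] ->
  (u = x /\ v = y) \/ (u = y /\ v = x).
Proof.
move=> uv E.
have hu : u \in [set x; y] by rewrite -E !inE eqxx.
have hv : v \in [set x; y] by rewrite -E !inE eqxx orbT.
have hx : x \in [set u; v] by rewrite E !inE eqxx.
have hy : y \in [set u; v] by rewrite E !inE eqxx orbT.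
case/set2P: hu => Hu; case/set2P: hv => Hv; subst; try by auto.
all: try by rewrite eqxx in uv.
all: try by case/set2P: hy => Hy; subst; rewrite ?eqxx in uv; auto.
all: try by case/set2P: hx => Hx; subst; rewrite ?eqxx in uv; auto.
Qed.

Definition o0 : 'I_3 := @Ordinal 3 0 isT.
Definition o1 : 'I_3 := @Ordinal 3 1 isT.
Definition o2 : 'I_3 := @Ordinal 3 2 isT.
Lemma I3_cases (a : 'I_3) : [\/ a = o0, a = o1 | a = o2].
Proof.
case: a => [[|[|[|a]]] Ha]; [apply: Or31|apply: Or32|apply: Or33|]; try exact/val_inj.
by [].
Qed.

Section Fan.
Variables m n : nat.
Hypothesis hm : 0 < m.
Hypothesis hn : 2 < n.

Local Notation V := (mfan_vertex m n).
Local Notation adj := (mfan_adj m n).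

Definition NN := m * n.+1.
Definition mu (i : nat) := if i %% 2 == 0 then n - 1 - i %/ 2 else n %/ 2 - i.+1 %/ 2.

Lemma mu_lt i : i < n -> mu i < n.
Proof. rewrite /mu; case: eqP => *; lia. Qed.

Lemma mu_inj i j : i < n -> j < n -> mu i = mu j -> i = j.
Proof. rewrite /mu; case: eqP; case: eqP => * ; lia. Qed.

Lemma mu_sum i : i.+1 < n -> mu i + mu i.+1 + i + i.+1 = n - 1 + n %/ 2 + i.
Proof. rewrite /mu; case: eqP; case: eqP => //= *; lia. Qed.

Definition idx (x : V) : nat := if x.2 is Some i then i : nat else 0.
Definition isC (x : V) : nat := if x.2 is None then 1 else 0.

Definition Sp (k i : nat) := NN + mu i * m + m - k.
Definition Pa (k i : nat) := NN + m * n + m * n.-1 - (k + m * i).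

Definition lamV (x : V) : nat :=
  if x.2 is Some i then i * m + x.1 + 1 else m * n + 1 + x.1.

Definition lamE (s : {set V}) : nat :=
  let K := (\sum_(x in s) (x.1 : nat)) %/ 2 in
  let I := \sum_(x in s) idx x in
  if 0 < \sum_(x in s) isC x then Sp K I else Pa K (I %/ 2).

Definition lam (z : elt adj) : nat :=
  match z with inl v => lamV v | inr e => lamE (val e) end.

Lemma adj_sym x y : adj x y = adj y x.
Proof.
rewrite /mfan_adj eq_sym; case: x y => [a [i|]] [b [j|]] //=; by rewrite orbC.
Qed.

Lemma adj_irr x : adj x x = false.
Proof. rewrite /mfan_adj; case: x => [a [i|]] //=; rewrite eqxx /=; lia. Qed.

Lemma spoke_val (k : 'I_m) (i : 'I_n) : lamE [set (k, None); (k, Some i)] = Sp k i.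
Proof.
rewrite /lamE !sum2 ?xpair_eqE ?eqxx //= /idx /isC /=.
by have -> : (k + k) %/ 2 = k by lia.
Qed.

Lemma path_val (k : 'I_m) (i j : 'I_n) : j = i.+1 :> nat ->
  lamE [set (k, Some i); (k, Some j)] = Pa k i.
Proof.
move=> hij.
have ne : (k, Some i) != (k, Some j) :> V.
  apply/negP => /eqP [] /(congr1 val) /=; lia.
rewrite /lamE !sum2 //= /idx /isC /=.
have -> : (k + k) %/ 2 = k by lia.
by have -> : (i + j) %/ 2 = i by lia.
Qed.

Definition CC := 3 + 3 * NN + 2 * m + 2 * (m * n) + m * n.-1 + m * (n.-1 + n %/ 2).

Lemma core (k i : nat) : k < m -> i.+1 < n ->
  (m * n + 1 + k) + (i * m + k + 1) + (i.+1 * m + k + 1) + Sp k i + Sp k i.+1 + Pa k i = CC.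
Proof.
move=> hk hi; have H := congr1 (muln m) (mu_sum hi).
rewrite /Sp /Pa /CC /NN.
have h1 : m * i.+1 <= m * n.-1 by apply: leq_mul => //; lia.
move: H h1; rewrite !mulnDr.
generalize (mu i) (mu i.+1) (n %/ 2) => a b q.
nia.
Qed.

Definition S3 (x y z : V) :=
  lamV x + lamV y + lamV z + lamE [set x; y] + lamE [set x; z] + lamE [set y; z].

Lemma S3_swap12 x y z : S3 x y z = S3 y x z.
Proof. rewrite /S3 [[set y; x]]setUC; lia. Qed.

Lemma S3_swap23 x y z : S3 x y z = S3 x z y.
Proof. rewrite /S3 [[set z; y]]setUC; lia. Qed.

Lemma tri_c (k : 'I_m) (i j : 'I_n) : j = i.+1 :> nat ->
  S3 (k, None) (k, Some i) (k, Some j) = CC.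
Proof.
move=> hij; rewrite /S3 !spoke_val path_val // /lamV /=.
rewrite hij; apply: core => //; rewrite -hij //.
Qed.

Lemma tri x y z : adj x y -> adj x z -> adj y z -> S3 x y z = CC.
Proof.
case: x y z => [a xo] [b yo] [c zo].
rewrite /mfan_adj /=.
case/andP => /eqP eab h1 /andP [/eqP eac h2] /andP [_ h3].
subst b c; move: h1 h2 h3.
case: xo yo zo => [i|] [j|] [l|] //=.
- by case/orP => /eqP h1; case/orP => /eqP h2; case/orP => /eqP h3; lia.
- move=> h _ _; rewrite S3_swap23 S3_swap12.
  by case/orP: h => /eqP h; [|rewrite S3_swap23]; apply: tri_c; lia.
- move=> _ h _; rewrite S3_swap12.
  by case/orP: h => /eqP h; [|rewrite S3_swap23]; apply: tri_c; lia.
- by move=> _ _; case/orP => /eqP h; [|rewrite S3_swap23]; apply: tri_c; lia.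
Qed.

Lemma edge_mem u v : adj u v -> [set u; v] \in edge_set adj.
Proof. move=> h; rewrite inE; apply/existsP; exists u; apply/existsP; exists v; by rewrite h eqxx. Qed.

Definition mkE u v (h : adj u v) : edge adj := Sub [set u; v] (edge_mem h).

Lemma mkE_val u v (h : adj u v) : val (mkE h) = [set u; v].
Proof. by []. Qed.

Lemma edge_adj (e : edge adj) x y : val e = [set x; y] -> adj x y.
Proof.
have := valP e; rewrite inE => /existsP [u /existsP [v /andP [huv /eqP E]]].
rewrite E => E'.
have uv : u != v by apply/negP => /eqP h; subst; rewrite adj_irr in huv.
by case: (set2_eq uv E') => [[<- <-]|[<- <-]] //; rewrite adj_sym.
Qed.

Lemma spoke_adj (k : 'I_m) (i : 'I_n) : adj (k, None) (k, Some i).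
Proof. by rewrite /mfan_adj /= eqxx. Qed.

Lemma ltn_w (i : 'I_n.-1) : i < n.
Proof. have := ltn_ord i; lia. Qed.
Lemma ltn_s (i : 'I_n.-1) : i.+1 < n.
Proof. have := ltn_ord i; lia. Qed.

Definition iw (i : 'I_n.-1) : 'I_n := Ordinal (ltn_w i).
Definition is1 (i : 'I_n.-1) : 'I_n := Ordinal (ltn_s i).

Lemma path_adj (k : 'I_m) (i : 'I_n.-1) : adj (k, Some (iw i)) (k, Some (is1 i)).
Proof. by rewrite /mfan_adj /= eqxx /= eqxx. Qed.

Definition spk k i : edge adj := mkE (spoke_adj k i).
Definition pth k i : edge adj := mkE (path_adj k i).

Definition U := (V + ('I_m * 'I_n + 'I_m * 'I_n.-1))%type.

Definition toElt (u : U) : elt adj :=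
  match u with
  | inl v => inl v
  | inr (inl (k, i)) => inr (spk k i)
  | inr (inr (k, i)) => inr (pth k i)
  end.

Definition lab (u : U) : nat :=
  match u with
  | inl v => lamV v
  | inr (inl (k, i)) => Sp k i
  | inr (inr (k, i)) => Pa k i
  end.

Lemma lam_toElt u : lam (toElt u) = lab u.
Proof.
case: u => [v|[[k i]|[k i]]] //=.
- exact: spoke_val.
- exact: path_val.
Qed.

Lemma toElt_surj x : exists u, toElt u = x.
Proof.
case: x => [v|e]; first by exists (inl v).
have := valP e; rewrite inE => /existsP [[a uo] /existsP [[b vo] /andP [huv /eqP E]]].
move: huv; rewrite /mfan_adj /= => /andP [/eqP eab]; subst b.
case: uo vo E => [i|] [j|] // E.
- case/orP => /eqP h.
  + have hi : i < n.-1 by have := ltn_ord j; lia.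
    exists (inr (inr (a, Ordinal hi))); congr inr; apply/val_inj => /=.
    have -> : iw (Ordinal hi) = i by apply/val_inj.
    have -> : is1 (Ordinal hi) = j by apply/val_inj => /=; lia.
    by rewrite E.
  + have hj : j < n.-1 by have := ltn_ord i; lia.
    exists (inr (inr (a, Ordinal hj))); congr inr; apply/val_inj => /=.
    have -> : iw (Ordinal hj) = j by apply/val_inj.
    have -> : is1 (Ordinal hj) = i by apply/val_inj => /=; lia.
    by rewrite E setUC.
- move=> _; exists (inr (inl (a, i))); congr inr; apply/val_inj => /=.
  by rewrite E setUC.
- move=> _; exists (inr (inl (a, j))); congr inr; apply/val_inj => /=.
  by rewrite E.
Qed.

Lemma divmod_eq a b r s : r < m -> s < m -> a * m + r = b * m + s -> a = b /\ r = s.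
Proof.
move=> h1 h2 h3; case: (ltngtP a b) => h.
- have hh : a.+1 * m <= b * m := leq_mul h (leqnn m). lia.
- have hh : b.+1 * m <= a * m := leq_mul h (leqnn m). lia.
- subst; lia.
Qed.

Lemma rV k i : k < m -> i < n -> 1 <= i * m + k + 1 <= m * n.
Proof. move=> hk hi; have hh : i.+1 * m <= n * m by apply: leq_mul. nia. Qed.

Lemma rS k i : k < m -> i < n -> NN + 1 <= Sp k i <= NN + m * n.
Proof.
move=> hk hi; have := mu_lt hi; rewrite /Sp /NN; move: (mu i) => a ha.
have hh : a.+1 * m <= n * m by apply: leq_mul.
nia.
Qed.

Lemma rP k i : k < m -> i < n.-1 -> NN + m * n + 1 <= Pa k i <= NN + m * n + m * n.-1.
Proof.
move=> hk hi; have hh : i.+1 * m <= n.-1 * m by apply: leq_mul.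
rewrite /Pa /NN; nia.
Qed.

Lemma iV k i k' i' : k < m -> k' < m -> i * m + k + 1 = i' * m + k' + 1 -> i = i' /\ k = k'.
Proof. move=> hk hk' E; apply: divmod_eq => //; lia. Qed.

Lemma iS k i k' i' : k < m -> k' < m -> i < n -> i' < n -> Sp k i = Sp k' i' -> i = i' /\ k = k'.
Proof.
move=> hk hk' hi hi'; rewrite /Sp => E.
have [h1 h2] : mu i = mu i' /\ m.-1 - k = m.-1 - k' by apply: divmod_eq; lia.
split; [exact: mu_inj|lia].
Qed.

Lemma iP k i k' i' : k < m -> k' < m -> i < n.-1 -> i' < n.-1 -> Pa k i = Pa k' i' -> i = i' /\ k = k'.
Proof.
move=> hk hk' hi hi'; have := rP hk hi; have := rP hk' hi'; rewrite /Pa => h1 h2 E.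
have [] : i = i' /\ k = k' by apply: divmod_eq => //; lia.
by [].
Qed.

Definition TT := NN + (m * n + m * n.-1).

Lemma lab_range u : 1 <= lab u <= TT.
Proof.
rewrite /TT; case: u => [[k [i|]]|[[k i]|[k i]]] /=; rewrite /lamV /=.
- have := rV (ltn_ord k) (ltn_ord i); rewrite /NN; lia.
- rewrite /NN; have := ltn_ord k; lia.
- have := rS (ltn_ord k) (ltn_ord i); lia.
- have := rP (ltn_ord k) (ltn_ord i); lia.
Qed.

Lemma lab_inj : injective lab.
Proof.
have hNN : NN = m * n + m by (rewrite /NN; lia).
case=> [[k [i|]]|[[k i]|[k i]]] [[k' [i'|]]|[[k' i']|[k' i']]] /=; rewrite /lamV /= => E.
all: have hk := ltn_ord k; have hk' := ltn_ord k'.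
all: try have hi := ltn_ord i.
all: try have hi' := ltn_ord i'.
all: try have r1 := rV hk hi.
all: try have r1' := rV hk' hi'.
all: try have r2 := rS hk hi.
all: try have r2' := rS hk' hi'.
all: try have r3 := rP hk hi.
all: try have r3' := rP hk' hi'.
all: try (exfalso; lia).
- by case: (iV hk hk' E) => /val_inj -> /val_inj ->.
- by have /val_inj -> : k = k' :> nat by lia.
- by case: (iS hk hk' hi hi' E) => /val_inj -> /val_inj ->.
- by case: (iP hk hk' hi hi' E) => /val_inj -> /val_inj ->.
Qed.

Lemma magic V' E' : is_H_subgraph C3_adj V' E' ->
  \sum_(v in V') lam (inl v) + \sum_(e in E') lam (inr e) = CC.
Proof.
case=> Hsub [f [finj fim Hiff]].
have nab (a b : 'I_3) : a != b -> exists2 e, e \in E' & val e = [set f a; f b].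
  by move=> h; apply: (Hiff a b).1.
have [e01 i01 v01] := nab o0 o1 isT.
have [e02 i02 v02] := nab o0 o2 isT.
have [e12 i12 v12] := nab o1 o2 isT.
have fd (a b : 'I_3) : a != b -> f a != f b by rewrite (inj_eq finj).
have f01 := fd o0 o1 isT; have f02 := fd o0 o2 isT; have f12 := fd o1 o2 isT.
have eV : V' = [set f o0; f o1; f o2].
  rewrite -fim; apply/setP => x; rewrite !inE; apply/imsetP/idP.
  - by case=> a _ ->; case: (I3_cases a) => ->; rewrite eqxx ?orbT.
  - by case/orP => [/orP [] |] /eqP ->; [exists o0|exists o1|exists o2].
have ne (a b c d : V) (e1 e2 : edge adj) : val e1 = [set a; b] -> val e2 = [set c; d] ->
    (b \notin [set c; d]) -> e1 != e2.
  move=> h1 h2 hb; apply/negP => /eqP h; move: hb; rewrite -h2 -h h1 !inE eqxx orbT //.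
have d1 : e01 != e02 by apply: (ne _ _ _ _ _ _ v01 v02); rewrite !inE negb_or eq_sym f01 f12.
have d2 : e01 != e12 by apply: (ne _ _ _ _ _ _ (etrans v01 (setUC _ _)) v12);
  rewrite !inE negb_or f01 f02.
have d3 : e02 != e12 by apply: (ne _ _ _ _ _ _ (etrans v02 (setUC _ _)) v12);
  rewrite !inE negb_or f01 f02.
have eE : E' = [set e01; e02; e12].
  apply/setP => e; rewrite !inE; apply/idP/idP.
  - move=> he; have := valP e; rewrite inE => /existsP [u /existsP [v /andP [huv /eqP E]]].
    have /subsetP sub := Hsub e he; rewrite E in sub.
    have : u \in V' by apply: sub; rewrite !inE eqxx.
    rewrite -fim => /imsetP [a _ ua].
    have : v \in V' by apply: sub; rewrite !inE eqxx orbT.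
    rewrite -fim => /imsetP [b _ vb]; subst u v.
    case: (I3_cases a) => ha; case: (I3_cases b) => hb; subst a b; rewrite ?adj_irr // in huv.
    + have -> : e = e01 by (apply/val_inj; rewrite E v01).
      by rewrite eqxx ?orbT.
    + have -> : e = e02 by (apply/val_inj; rewrite E v02).
      by rewrite eqxx ?orbT.
    + have -> : e = e01 by (apply/val_inj; rewrite E v01 setUC).
      by rewrite eqxx ?orbT.
    + have -> : e = e12 by (apply/val_inj; rewrite E v12).
      by rewrite eqxx ?orbT.
    + have -> : e = e02 by (apply/val_inj; rewrite E v02 setUC).
      by rewrite eqxx ?orbT.
    + have -> : e = e12 by (apply/val_inj; rewrite E v12 setUC).
      by rewrite eqxx ?orbT.
  - by case/orP => [/orP [] |] /eqP ->.
rewrite eV eE !sum3 //= v01 v02 v12.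
have := tri (edge_adj v01) (edge_adj v02) (edge_adj v12); rewrite /S3; lia.
Qed.

Section Tri.
Variables (k : 'I_m) (i0 : nat) (h : i0.+1 < n).

Definition tf (a : 'I_3) : V :=
  if val a == 0 then (k, None)
  else if val a == 1 then (k, Some (Ordinal (ltnW h))) else (k, Some (Ordinal h)).

Definition tV := tf @: setT.
Definition tE := [set e : edge adj | val e \subset tV].

Lemma tf_adj a b : a != b -> adj (tf a) (tf b).
Proof.
case: (I3_cases a) => ->; case: (I3_cases b) => -> //= _;
  rewrite /tf /mfan_adj /= eqxx //= eqxx ?orbT //.
Qed.

Lemma tf_inj : injective tf.
Proof.
move=> a b E.
have := congr1 (fun x : V => if x.2 is Some i then (i : nat).+1 else 0) E.
by case: (I3_cases a) => ->; case: (I3_cases b) => -> //=; lia.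
Qed.

Lemma tri_H : is_H_subgraph C3_adj tV tE.
Proof.
split; first by move=> e; rewrite inE.
exists tf; split => //; first exact: tf_inj.
move=> a b; split.
- move=> hab; exists (mkE (tf_adj hab)) => //.
  rewrite inE; apply/subsetP => x; rewrite /= !inE => /orP [] /eqP ->; exact: imset_f.
- case=> e _ ve; have := edge_adj ve; rewrite /C3_adj.
  by apply: contraTneq => ->; rewrite adj_irr.
Qed.

End Tri.

Lemma covering : H_covering C3_adj adj.
Proof.
move=> e; have [u hu] := toElt_surj (inr e).
case: u hu => [v|[[k i]|[k i]]] //= [<-].
- case: (ltnP i.+1 n) => hi.
  + exists (tV k hi), (tE k hi); split; first exact: tri_H.
    rewrite inE; apply/subsetP => x; rewrite /= !inE => /orP [] /eqP ->; apply/imsetP.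
    * by exists o0.
    * by exists o1 => //; rewrite /tf /=; congr (_, Some _); apply/val_inj.
  + have hi' : i.-1.+1 < n by have := ltn_ord i; lia.
    exists (tV k hi'), (tE k hi'); split; first exact: tri_H.
    rewrite inE; apply/subsetP => x; rewrite /= !inE => /orP [] /eqP ->; apply/imsetP.
    * by exists o0.
    * exists o2 => //; rewrite /tf /=; congr (_, Some _); apply/val_inj => /=; lia.
- exists (tV k (ltn_s i)), (tE k (ltn_s i)); split; first exact: tri_H.
  rewrite inE; apply/subsetP => x; rewrite /= !inE => /orP [] /eqP ->; apply/imsetP.
  * by exists o1 => //; rewrite /tf /=; congr (_, Some _); apply/val_inj.
  * by exists o2 => //; rewrite /tf /=; congr (_, Some _); apply/val_inj.
Qed.

Lemma cardV : #|V| = NN.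
Proof. by rewrite card_prod card_option !card_ord. Qed.

Lemma lam_inj : injective lam.
Proof.
move=> x y E; have [u hu] := toElt_surj x; have [u' hu'] := toElt_surj y.
rewrite -hu -hu' !lam_toElt in E; by rewrite -hu -hu' (lab_inj E).
Qed.

Lemma lam_range x : 1 <= lam x <= TT.
Proof. have [u <-] := toElt_surj x; rewrite lam_toElt; exact: lab_range. Qed.

Lemma lamV_range v : 1 <= lamV v <= NN.
Proof.
case: v => k [i|]; rewrite /lamV /=.
- have := rV (ltn_ord k) (ltn_ord i); rewrite /NN; lia.
- rewrite /NN; have := ltn_ord k; lia.
Qed.

Lemma edge_lab e : NN < lam (inr e).
Proof.
have [[v|[[k i]|[k i]]] hu] := toElt_surj (inr e) => //; rewrite -hu lam_toElt /=.
- have := rS (ltn_ord k) (ltn_ord i); lia.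
- have := rP (ltn_ord k) (ltn_ord i); lia.
Qed.

Definition cE (w : ('I_m * 'I_n + 'I_m * 'I_n.-1)%type) : edge adj :=
  match w with inl (k, i) => spk k i | inr (k, i) => pth k i end.

Lemma card_edge_ge : m * n + m * n.-1 <= #|edge adj|.
Proof.
have H w : toElt (inr w) = inr (cE w) by case: w => [[]|[]].
have inj : injective cE.
  move=> w w' E; have : lab (inr w) = lab (inr w') by rewrite -!lam_toElt !H E.
  by move/lab_inj => [].
by have := leq_card _ inj; rewrite card_sum !card_prod !card_ord.
Qed.

Lemma main : H_supermagic C3_adj adj.
Proof.
set s := map lam (enum (elt adj)).
have us : uniq s by rewrite map_inj_uniq ?enum_uniq //; exact: lam_inj.
have ss : {subset s <= iota 1 TT}.
  by move=> y /mapP [x _ ->]; rewrite mem_iota; have := lam_range x; lia.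
have sz : size (iota 1 TT) <= size s.
  rewrite size_iota size_map -cardE card_sum cardV /TT; have := card_edge_ge; lia.
have [e1 e2] := uniq_min_size us ss sz.
have ctot : #|V| + #|edge adj| = TT.
  by rewrite -card_sum cardE -(size_map lam) e1 size_iota.
split; first exact: covering.
exists lam; split; [split|].
- split; first exact: lam_inj.
  + by move=> x; rewrite ctot; exact: lam_range.
  + move=> k; rewrite ctot => hk; have : k \in s by rewrite e2 mem_iota; lia.
    by case/mapP => x _ ->; exists x.
- by exists CC => V' E' H; exact: magic H.
- move=> k; rewrite cardV; split.
  + by case=> v <-; exact: lamV_range.
  + move=> hk; have : k \in s by rewrite e2 mem_iota /TT; lia.
    case/mapP => [[v|e]] _ E; first by exists v.
    have := edge_lab e; rewrite -E; lia.
Qed.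

End Fan.

Theorem theorem2 (m n : nat) : 2 <= m -> 3 <= n -> H_supermagic C3_adj (mfan_adj m n).
Proof. move=> hm hn; apply: main; lia. Qed.
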